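(* For every $N\in\mathbb{N}$ there exists $L\in\mathbb{N}$ and an integer $n\geq N$ such that $\Delta_\ell(n)<0$ for all $\ell\geq L$.
   Context: For integers $n\geq 0$ let $S_n$ be the symmetric group on $n$ elements ($S_0$ trivial). For an integer $\ell\geq 1$ let $C_{\ell,n}=\{(\pi_1,\dots,\pi_\ell)\in S_n^\ell : \pi_j\pi_k=\pi_k\pi_j \text{ for all } 1\le j,k\le \ell\}$ and $N_\ell(n)=|C_{\ell,n}|/|S_n|$ (so $N_\ell(0)=1$). Define $\Delta_\ell(n)=N_\ell(n)^2-N_\ell(n-1)N_\ell(n+1)$ for $n\geq 1$. *)

(* Defs.v *)
From HB Require Import structures.
From mathcomp Require Import all_boot all_order all_fingroup all_algebra.
Set Implicit Arguments. Unset Strict Implicit. Unset Printing Implicit Defensive.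
Import GRing.Theory Num.Theory.

Definition commuting_tuples (l n : nat) : {set {ffun 'I_l -> {perm 'I_n}}} :=
  [set f : {ffun 'I_l -> {perm 'I_n}} | [forall j, forall k, (f j * f k == f k * f j)%g]].

Definition Nl (l n : nat) : rat :=
  ((#|commuting_tuples l n|)%:R / (#|[set: {perm 'I_n}]|)%:R)%R.

(* Delta_l(n) = N_l(n)^2 - N_l(n-1) N_l(n+1)  (meaningful for n >= 1). *)
Definition Delta (l n : nat) : rat :=
  (Nl l n ^+ 2 - Nl l n.-1 * Nl l n.+1)%R.

(* Main.v *)
Require Import Defs.
From mathcomp Require Import all_boot all_order all_fingroup all_algebra.
From mathcomp Require Import zify ring lra.
Set Implicit Arguments. Unset Strict Implicit. Unset Printing Implicit Defensive.
Import GRing.Theory Num.Theory.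

Fixpoint fm (n : nat) : nat :=
  match n with
  | S (S (S ((S (S m)) as k))) => 3 * fm k
  | 4 => 4 | 3 => 3 | 2 => 2 | _ => 1 end.

Lemma fmS a : 2 <= a -> fm (a + 3) = 3 * fm a.
Proof. by case: a => [|[|b]] // _; rewrite addn3. Qed.

Lemma fm_ge a : a <= fm a.
Proof.
elim: a {-2}a (leqnn a) => [|n IH] a Ha; first by case: a Ha.
case: (leqP a 4) => Ha4; first by case: a Ha Ha4 => [|[|[|[|[|]]]]].
have -> : a = (a - 3) + 3 by lia.
rewrite fmS; last by lia.
have := IH (a - 3) ltac:(lia). lia.
Qed.

Lemma fm_mul a b : fm a * fm b <= fm (a + b).
Proof.
move: {2}(a + b) (leqnn (a + b)) => k; elim: k a b => [|n IH] a b Hab.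
  by case: a b Hab => [|?] [|?].
case: (leqP a 4) => Ha4; case: (leqP b 4) => Hb4.
- by case: a Ha4 {Hab} => [|[|[|[|[|]]]]] //; case: b Hb4 => [|[|[|[|[|]]]]].
- have -> : b = (b - 3) + 3 by lia.
  rewrite addnA !fmS; try lia.
  rewrite mulnCA leq_mul2l /=; apply: IH; lia.
- have -> : a = (a - 3) + 3 by lia.
  rewrite addnAC !fmS; try lia.
  rewrite -mulnA leq_mul2l /=; apply: IH; lia.
- have -> : b = (b - 3) + 3 by lia.
  rewrite addnA !fmS; try lia.
  rewrite mulnCA leq_mul2l /=; apply: IH; lia.
Qed.

Lemma fm_val m : fm (3 * m + 4) = 4 * 3 ^ m.
Proof.
elim: m => [|m IH] //.
have -> : 3 * m.+1 + 4 = (3 * m + 4) + 3 by lia.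
by rewrite fmS ?IH ?expnS 1?mulnCA //; lia.
Qed.

Lemma fm_pos a : 0 < fm a.
Proof. case: a => // a; exact: leq_trans (fm_ge a.+1). Qed.


Lemma abel_bound n (S : {set 'I_n}) (H : {group {perm 'I_n}}) :
  abelian H -> (forall h x, h \in H -> x \notin S -> h x = x) ->
  #|H| <= fm #|S|.
Proof.
move: {2}#|S| (leqnn #|S|) => k; elim: k S H => [|k IH] S H.
  rewrite leqn0 cards_eq0 => /eqP -> _ Hfix.
  suff HT : H \subset (1%g : {set {perm 'I_n}}).
    have := subset_leq_card HT; rewrite cards1 => h1; exact: (leq_trans h1 (fm_pos _)).
  apply/subsetP => h hH; rewrite inE; apply/eqP/permP => x.
  by rewrite perm1 Hfix // inE.
move=> HS abH Hfix.
case: (set_0Vmem S) => [S0|[x xS]].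
  suff HT : H \subset (1%g : {set {perm 'I_n}}).
    have := subset_leq_card HT; rewrite cards1 => h1; exact: (leq_trans h1 (fm_pos _)).
  apply/subsetP => h hH; rewrite inE; apply/eqP/permP => y.
  by rewrite perm1 Hfix // S0 inE.
set O := orbit 'P H x.
have OS : O \subset S.
  apply/subsetP => y /orbitP [h hH <-] /=.
  apply: contraT => hxS.
  have := Hfix h^-1%g (h x) (groupVr hH) hxS.
  rewrite -permM mulgV perm1 => ex; by move: hxS; rewrite apermE -ex xS.
have xO : x \in O by exact: orbit_refl.
set St := ('C_H[x | 'P])%g.
have abSt : abelian St by apply: abelianS abH; apply: subsetIl.
have StFix : forall h y, h \in St -> y \notin S :\: O -> h y = y.
  move=> g y; rewrite inE => /andP [gH /astab1P gx].
  rewrite inE negb_and negbK => /orP [yO|yS]; last by apply: Hfix.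
  case/orbitP: yO => h hH <- /=.
  have cgh : commute g h := centsP abH g gH h hH.
  have gx' : g x = x by exact: gx.
  by rewrite apermE -permM -cgh permM gx'.
have cO : #|O| + #|S :\: O| = #|S|.
  by rewrite cardsD (setIidPr OS) subnKC // subset_leq_card.
have O0 : 0 < #|O| by apply/card_gt0P; exists x.
have := IH (S :\: O) [group of St] ltac:(lia) abSt StFix.
rewrite -(card_orbit_stab 'P H x) -/O -/St => HSt.
apply: (leq_trans (leq_mul (fm_ge #|O|) HSt)).
by rewrite -cO fm_mul.
Qed.


Lemma leq_expbase a b e : a <= b -> a ^ e <= b ^ e.
Proof. by move=> ab; elim: e => // e IH; rewrite !expnS leq_mul. Qed.

Lemma card_bigcup_le (I T : finType) (P : pred I) (F : I -> {set T}) :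
  #|\bigcup_(i | P i) F i| <= \sum_(i | P i) #|F i|.
Proof.
elim/big_rec2: _ => [|i B k _ IH]; first by rewrite cards0.
exact: leq_trans (leq_card_setU _ _).1 (leq_add (leqnn _) IH).
Qed.

Lemma c_upper l n :
  #|commuting_tuples l n| <= #|{group {perm 'I_n}}| * fm n ^ l.
Proof.
set U := \bigcup_(G : {group {perm 'I_n}} | abelian G)
   [set f : {ffun 'I_l -> {perm 'I_n}} | [forall j, f j \in G]].
have sub : commuting_tuples l n \subset U.
  apply/subsetP => f; rewrite inE => /forallP Hc; apply/bigcupP.
  exists (<<[set f j | j : 'I_l]>>)%G.
    rewrite /= abelian_gen; apply/centsP => a /imsetP [j _ ->] b /imsetP [k _ ->].
    exact/eqP/(forallP (Hc j) k).
  rewrite inE; apply/forallP => j; apply: mem_gen; exact: imset_f.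
apply: leq_trans (subset_leq_card sub) _.
apply: leq_trans (card_bigcup_le _ _) _.
apply: leq_trans (_ : \sum_(G : {group {perm 'I_n}} | abelian G) fm n ^ l <= _).
  apply: leq_sum => G abG.
  have -> : #|[set f : {ffun 'I_l -> {perm 'I_n}} | [forall j, f j \in G]]|
          = #|G| ^ l.
    rewrite -[l in RHS]card_ord -card_ffun_on; apply: eq_card => f.
    rewrite inE; apply/forallP/ffun_onP => //.
  apply: leq_expbase.
  have := @abel_bound n [set: 'I_n] G abG.
  rewrite cardsT card_ord; apply => h x _; by rewrite inE.
rewrite sum_nat_const leq_mul2r; apply/orP; right; exact: max_card.
Qed.


Section Cyc.
Variable m : nat.
Definition trp (i : 'I_m.+1) : {perm 'I_m.+1} := perm (@addrI _ i).

Lemma trpE i x : trp i x = (i + x)%R.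
Proof. by rewrite permE. Qed.

Lemma c_cyc l : m.+1 ^ l <= #|commuting_tuples l m.+1|.
Proof.
pose F (e : {ffun 'I_l -> 'I_m.+1}) : {ffun 'I_l -> {perm 'I_m.+1}} :=
  [ffun j => trp (e j)].
have Finj : injective F.
  move=> e e' /ffunP H; apply/ffunP => j; have := H j; rewrite !ffunE => /permP /(_ 0%R).
  by rewrite !trpE !addr0.
have -> : m.+1 ^ l = #|[set F e | e in {ffun 'I_l -> 'I_m.+1}]|.
  by rewrite card_imset // card_ffun !card_ord.
apply: subset_leq_card; apply/subsetP => _ /imsetP [e _ ->].
rewrite inE; apply/forallP => j; apply/forallP => k; apply/eqP/permP => x.
by rewrite !permM !ffunE !trpE addrCA.
Qed.
End Cyc.

Section Blk.
Variables a b : nat.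
Definition blkf (s : {perm 'I_a}) (t : {perm 'I_b}) (i : 'I_(a + b)) : 'I_(a + b) :=
  unsplit (match split i with inl j => inl (s j) | inr j => inr (t j) end).

Lemma blkf_inj s t : injective (blkf s t).
Proof.
move=> i i'; rewrite /blkf => /(can_inj unsplitK) H.
apply: (can_inj splitK).
by case: (split i) H => j; case: (split i') => j' // [] /perm_inj ->.
Qed.

Definition blk s t : {perm 'I_(a + b)} := perm (@blkf_inj s t).

Lemma blkM s t s' t' : (blk s t * blk s' t')%g = blk (s * s') (t * t').
Proof.
apply/permP => i; rewrite permM !permE /blkf unsplitK.
by case: (split i) => j; rewrite permM.
Qed.

Lemma blk_inj s t s' t' : blk s t = blk s' t' -> s = s' /\ t = t'.
Proof.
move=> /permP H; split; apply/permP => j.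
  have := H (unsplit (inl j)); rewrite !permE /blkf unsplitK.
  by move/(can_inj unsplitK) => [].
have := H (unsplit (inr j)); rewrite !permE /blkf unsplitK.
by move/(can_inj unsplitK) => [].
Qed.

Lemma c_superm l :
  #|commuting_tuples l a| * #|commuting_tuples l b| <= #|commuting_tuples l (a + b)|.
Proof.
pose F (p : {ffun 'I_l -> {perm 'I_a}} * {ffun 'I_l -> {perm 'I_b}}) :
  {ffun 'I_l -> {perm 'I_(a + b)}} := [ffun j => blk (p.1 j) (p.2 j)].
have Finj : injective F.
  move=> [f g] [f' g'] /ffunP H.
  have E j : f j = f' j /\ g j = g' j by apply: blk_inj; have := H j; rewrite !ffunE.
  by congr pair; apply/ffunP => j; case: (E j).
rewrite -cardsX -(card_imset _ Finj).
apply: subset_leq_card; apply/subsetP => _ /imsetP [[f g] /setXP [fC gC] ->].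
rewrite inE; apply/forallP => j; apply/forallP => k; rewrite !ffunE /= !blkM.
move: fC gC; rewrite !inE => /forallP /(_ j) /forallP /(_ k) /eqP ->.
by move=> /forallP /(_ j) /forallP /(_ k) /eqP ->.
Qed.
End Blk.


Notation cc l n := #|commuting_tuples l n|.

Lemma lower3 l m : (3 ^ l) ^ m.+1 <= cc l (3 * m.+1).
Proof.
elim: m => [|m IH]; first by rewrite muln1 expn1; exact: c_cyc 2 l.
rewrite mulnS expnS; apply: leq_trans (c_superm _ _ _).
exact: leq_mul (c_cyc 2 l) IH.
Qed.

Lemma lower5 l m : 2 ^ l * (3 ^ l) ^ m.+1 <= cc l (3 * m.+1 + 2).
Proof.
rewrite addnC; apply: leq_trans (c_superm _ _ _).
exact: leq_mul (c_cyc 1 l) (lower3 l m).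
Qed.

Lemma bern l : 8 ^ l * (8 + l) <= 8 * 9 ^ l.
Proof.
elim: l => // l IH; rewrite !expnS.
have h : 8 ^ l * 8 <= 8 ^ l * (8 + l) by rewrite leq_mul2l leq_addr orbT.
nia.
Qed.

Lemma nat_main m l K :
  let n := 3 * m + 4 in
  8 * K ^ 2 * (n + 1) <= l ->
  cc l n <= K * fm n ^ l ->
  cc l n ^ 2 * (n + 1) < cc l (3 * m.+1) * cc l (3 * m.+1 + 2) * n.
Proof.
move=> n Hl Hc.
rewrite /n fm_val expnMn in Hc; rewrite -/n.
set t := (3 ^ m) ^ l.
have tpos : 0 < t by rewrite expn_gt0 expn_gt0.
have Ha := lower3 l m; have Hb := lower5 l m.
rewrite expnS -expnAC -/t in Ha Hb.
have B := bern l.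
have H9 : K ^ 2 * (n + 1) * 8 ^ l < 9 ^ l.
  have : 8 ^ l * (8 * (K ^ 2 * (n + 1))) < 8 ^ l * (8 + l).
    rewrite ltn_mul2l expn_gt0 /=; lia.
  move=> h; have := leq_trans h B; rewrite mulnA (mulnC (8 ^ l)) -mulnA ltn_mul2l /=.
  by rewrite mulnC.
have H18 : K ^ 2 * (n + 1) * 16 ^ l < 18 ^ l.
  have -> : 16 = 2 * 8 by []. have -> : 18 = 2 * 9 by [].
  rewrite !expnMn mulnCA ltn_mul2l expn_gt0 /=; exact: H9.
have e9 : 9 ^ l = 3 ^ l * 3 ^ l by rewrite -expnMn.
have e16 : 16 ^ l = 4 ^ l * 4 ^ l by rewrite -expnMn.
have e18 : 18 ^ l = 2 ^ l * (3 ^ l * 3 ^ l) by rewrite -!expnMn.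
apply: (leq_trans (n := ((K * (4 ^ l * t)) ^ 2 * (n + 1)).+1)).
  by rewrite ltnS leq_mul2r leq_exp2r // Hc orbT.
apply: (leq_trans (n := 18 ^ l * t ^ 2)).
  have : K ^ 2 * (n + 1) * 16 ^ l * t ^ 2 < 18 ^ l * t ^ 2.
    by rewrite ltn_mul2r expn_gt0 tpos.
  by rewrite e16; apply: leq_trans; apply: eq_leq; ring.
apply: (leq_trans (n := cc l (3 * m.+1) * cc l (3 * m.+1 + 2))).
  rewrite e18; apply: leq_trans (leq_mul Ha Hb); apply: eq_leq; ring.
by rewrite leq_pmulr // /n addn4.
Qed.


Lemma Nl_E l n : Nl l n = ((cc l n)%:R / (n`!)%:R)%R.
Proof. by rewrite /Nl cardsT card_Sn. Qed.

Lemma rat_main (k c a b : nat) :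
  c ^ 2 * (k.+2) < a * b * k.+1 ->
  (((c%:R / (k.+1)`!%:R) ^+ 2 - (a%:R / k`!%:R) * (b%:R / (k.+2)`!%:R)) < 0 :> rat)%R.
Proof.
move=> H.
rewrite !factS !natrM.
have q0 : (0 < (k`!)%:R :> rat)%R by rewrite ltr0n fact_gt0.
set q := ((k`!)%:R : rat).
have X0 : (0 < (q ^+ 2 * (k.+1)%:R ^+ 2 * (k.+2)%:R)^-1 :> rat)%R.
  by rewrite invr_gt0 !mulr_gt0 ?exprn_gt0 ?ltr0Sn.
set X := ((q ^+ 2 * (k.+1)%:R ^+ 2 * (k.+2)%:R)^-1)%R in X0.
rewrite subr_lt0.
have eL : ((c%:R / ((k.+1)%:R * q)) ^+ 2 = (c ^ 2 * k.+2)%:R * X :> rat)%R.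
  rewrite /X natrM natrX; field.
  have hk : (0 <= k%:R :> rat)%R by rewrite ler0n.
  rewrite -/q; apply/and3P; split; apply/eqP; lra.
have eR : ((a%:R / q) * (b%:R / ((k.+2)%:R * ((k.+1)%:R * q))) = (a * b * k.+1)%:R * X :> rat)%R.
  rewrite /X !natrM; field.
  have hk : (0 <= k%:R :> rat)%R by rewrite ler0n.
  rewrite -/q; apply/and3P; split; apply/eqP; lra.
by rewrite eL eR ltr_pM2r // ltr_nat.
Qed.


Theorem corollary1p5 :
  forall N : nat, exists (L n : nat),
    (N <= n)%N /\ (1 <= n)%N /\
    (forall l : nat, (1 <= l)%N -> (L <= l)%N -> (Delta l n < 0)%R).
Proof.
move=> N.
pose K := #|{group {perm 'I_(3 * N + 4)}}|.
exists (8 * K ^ 2 * (3 * N + 4 + 1)), (3 * N + 4); split; first lia.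
split; first lia.
move=> l _ Hl.
have Hnat := @nat_main N l K Hl (c_upper l _).
move: Hnat; rewrite /Delta.
have -> : 3 * N + 4 = (3 * N.+1).+1 by lia.
have -> : 3 * N.+1 + 2 = (3 * N.+1).+2 by lia.
set k := 3 * N.+1 => Hnat /=.
rewrite !Nl_E; apply: rat_main.
by rewrite addn1 in Hnat.
Qed.
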